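(* Let $\mathcal S$ be a trajectory set satisfying (LOP) and (K). Then there is no generalized portfolio which is an arbitrage with respect to the $\|\cdot\|$-null sets.
   Context: Fix $s_0\in\mathbb R$. A trajectory set is any set $\mathcal S$ of real sequences $S=(S_j)_{j\in\mathbb N_0}$ with $S_0=s_0$. A simple portfolio $(V,n,H)$ consists of $V\in\mathbb R$, $n\in\mathbb N$ and nonanticipating functions $H_i:\mathcal S\to\mathbb R$, $0\le i\le n-1$ (i.e. $H_i(S)=h_i(S_0,\dots,S_i)$ for some arbitrary $h_i:\mathbb R^{i+1}\to\mathbb R$). Its wealth is $\Pi^{V,n,H}_j(S)=V+\sum_{i=0}^{\min\{j,n\}-1}H_i(S)(S_{i+1}-S_i)$ and $\Pi^{V,n,H}_\infty:=\Pi^{V,n,H}_n$; it is positive if $V\ge0$ and $\Pi^{V,n,H}_\infty\ge0$ on $\mathcal S$. A generalized portfolio is a sequence $(V_m,n_m,H_m)_{m\in\mathbb N_0}$ of simple portfolios, positive for every $m\ge1$; it is a positive generalized portfolio if moreover $\Pi^{V_0,n_0,H_0}_j\equiv0$ for all $j$. A map $f:\mathcal S\to[-\infty,+\infty]$ is superhedged with initial endowment $V=\sum_{m=0}^\infty V_m$ by such a portfolio if $f\le\sum_{m=0}^\infty\Pi^{V_m,n_m,H_m}_\infty$ on $\mathcal S$. For $f\ge0$, $\bar I(f)$ is the infimum of initial endowments of positive generalized portfolios superhedging $f$. Let $\mathcal E=\{\Pi^{V,n,H}_\infty\}$ over all simple portfolios. (LOP): whenever two simple portfolios have equal terminal wealth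 $\Pi_\infty$ at every $S\in\mathcal S$, their initial endowments coincide; under (LOP), $I:\mathcal E\to\mathbb R$, $I(\Pi^{V,n,H}_\infty)=V$, is well defined. (K): $I(f)+\bar I(f^-)\le\bar I(f^+)$ for every $f\in\mathcal E$ ($f^\pm$ positive/negative parts). Define $\|f\|:=\bar I(|f|)$; a null set is $A\subseteq\mathcal S$ with $\|\mathbf 1_A\|=0$. A generalized portfolio $(V_m,n_m,H_m)_{m\in\mathbb N_0}$ is an arbitrage with respect to the $\|\cdot\|$-null sets if $\sum_{m=0}^\infty V_m=0$, the set $\{S:\sum_{m=0}^\infty\Pi^{V_m,n_m,H_m}_\infty(S)<0\}$ is a null set, and the set $\{S:\sum_{m=0}^\infty\Pi^{V_m,n_m,H_m}_\infty(S)>0\}$ is not a null set. *)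

(* Defs.v *)
From Stdlib Require Import Reals List Arith ClassicalEpsilon.
From Coquelicot Require Import Coquelicot.
Open Scope R_scope.

Definition traj := nat -> R.

Definition trajectory_set (s0 : R) (Sset : traj -> Prop) : Prop :=
  forall w, Sset w -> w 0%nat = s0.

(* A simple portfolio (V, n, H): V real, n in N = {1,2,...}, and
   H_i(S) = h_i(S_0, ..., S_i) for arbitrary h_i : R^{i+1} -> R
   (the argument (S_0,...,S_i) is encoded as a list of length i+1). *)
Record simple_portfolio := {
  spV : R;
  spn : nat;
  spn_pos : (1 <= spn)%nat;
  sph : nat -> list R -> R
}.

Definition spH (p : simple_portfolio) (i : nat) (w : traj) : R :=
  sph p i (map w (seq 0 (i + 1))).

Fixpoint gains (p : simple_portfolio) (w : traj) (k : nat) : R :=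
  match k with
  | O => 0
  | Datatypes.S k' => gains p w k' + spH p k' w * (w (k' + 1)%nat - w k')
  end.

Definition wealth (p : simple_portfolio) (j : nat) (w : traj) : R :=
  spV p + gains p w (Nat.min j (spn p)).

Definition wealth_inf (p : simple_portfolio) (w : traj) : R :=
  wealth p (spn p) w.

Definition positive_sp (Sset : traj -> Prop) (p : simple_portfolio) : Prop :=
  0 <= spV p /\ forall w, Sset w -> 0 <= wealth_inf p w.

Definition series_Rbar (u : nat -> R) : Rbar :=
  Lim_seq (fun N => sum_f_R0 u N).

Definition generalized_portfolio (Sset : traj -> Prop)
  (P : nat -> simple_portfolio) : Prop :=
  forall m, (1 <= m)%nat -> positive_sp Sset (P m).

Definition positive_generalized_portfolio (Sset : traj -> Prop)
  (P : nat -> simple_portfolio) : Prop :=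
  generalized_portfolio Sset P /\
  forall j w, Sset w -> wealth (P 0%nat) j w = 0.

Definition initial_endowment (P : nat -> simple_portfolio) : Rbar :=
  series_Rbar (fun m => spV (P m)).

Definition total_wealth (P : nat -> simple_portfolio) (w : traj) : Rbar :=
  series_Rbar (fun m => wealth_inf (P m) w).

Definition superhedges (Sset : traj -> Prop) (f : traj -> Rbar)
  (P : nat -> simple_portfolio) : Prop :=
  forall w, Sset w -> Rbar_le (f w) (total_wealth P w).

Definition Ibar (Sset : traj -> Prop) (f : traj -> Rbar) : Rbar :=
  Rbar_glb (fun v => exists P, positive_generalized_portfolio Sset P /\
                        superhedges Sset f P /\ initial_endowment P = v).

Definition LOP (Sset : traj -> Prop) : Prop :=
  forall p q : simple_portfolio,
    (forall w, Sset w -> wealth_inf p w = wealth_inf q w) -> spV p = spV q.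

(* (K): for f = Pi_infty^{V,n,H} in E, I(f) = V and
   I(f) + \bar I(f^-) <= \bar I(f^+). *)
Definition condK (Sset : traj -> Prop) : Prop :=
  forall p : simple_portfolio,
    Rbar_le (Rbar_plus (Finite (spV p))
               (Ibar Sset (fun w => Finite (Rmax (- wealth_inf p w) 0))))
            (Ibar Sset (fun w => Finite (Rmax (wealth_inf p w) 0))).

Definition norm (Sset : traj -> Prop) (f : traj -> Rbar) : Rbar :=
  Ibar Sset (fun w => Rbar_abs (f w)).

Definition indicator (A : traj -> Prop) (w : traj) : Rbar :=
  Finite (match excluded_middle_informative (A w) with
          | left _ => 1 | right _ => 0 end).

Definition null_set (Sset : traj -> Prop) (A : traj -> Prop) : Prop :=
  norm Sset (indicator A) = Finite 0.

Definition arbitrage_null (Sset : traj -> Prop)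
  (P : nat -> simple_portfolio) : Prop :=
  generalized_portfolio Sset P /\
  initial_endowment P = Finite 0 /\
  null_set Sset (fun w => Sset w /\ Rbar_lt (total_wealth P w) (Finite 0)) /\
  ~ null_set Sset (fun w => Sset w /\ Rbar_lt (Finite 0) (total_wealth P w)).

(* Main.v *)
Require Import Defs.
From Stdlib Require Import Reals.
From Coquelicot Require Import Coquelicot.
From Stdlib Require Import Reals Lra Lia List Arith ClassicalEpsilon Classical.
From Coquelicot Require Import Coquelicot.
Open Scope R_scope.

Fixpoint ssum (u : nat -> R) (n : nat) : R :=
  match n with O => 0 | S n' => ssum u n' + u n' end.

Lemma ssum_f_R0 u N : sum_f_R0 u N = ssum u (S N).
Proof. induction N; simpl in *; [lra| rewrite IHN; simpl; lra]. Qed.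

Lemma ssum_ext u v n : (forall i, (i < n)%nat -> u i = v i) -> ssum u n = ssum v n.
Proof. induction n; intros H; simpl; auto. rewrite IHn by (intros; apply H; lia). rewrite H by lia; auto. Qed.

Lemma ssum_le u v n : (forall i, (i < n)%nat -> u i <= v i) -> ssum u n <= ssum v n.
Proof. induction n; intros H; simpl; [lra|]. specialize (IHn ltac:(intros; apply H; lia)). specialize (H n ltac:(lia)). lra. Qed.

Lemma ssum_nonneg u n : (forall i, (i < n)%nat -> 0 <= u i) -> 0 <= ssum u n.
Proof. intros H. assert (Z : forall k, ssum (fun _ => 0) k = 0) by (induction k; simpl; [auto| rewrite IHk; lra]).
 rewrite <- (Z n). apply ssum_le; auto. Qed.

Lemma ssum_mono u n m : (n <= m)%nat -> (forall i, (n <= i)%nat -> 0 <= u i) -> ssum u n <= ssum u m.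
Proof. intros Hnm H. induction Hnm as [|m Hnm IH]; [apply Rle_refl|]. simpl. specialize (H m ltac:(lia)). lra. Qed.

Lemma ssum_plus u v n : ssum (fun i => u i + v i) n = ssum u n + ssum v n.
Proof. induction n; simpl; lra. Qed.

Lemma ssum_scal c u n : ssum (fun i => c * u i) n = c * ssum u n.
Proof. induction n; simpl; [ring| rewrite IHn; ring]. Qed.

Lemma ssum_shift u a n : ssum u (a + n) = ssum u a + ssum (fun i => u (a + i)%nat) n.
Proof. induction n; simpl. rewrite Nat.add_0_r; lra. rewrite Nat.add_succ_r. simpl. rewrite IHn. lra. Qed.

Lemma tri_identity (c : nat -> nat -> R) T :
  ssum (fun n => ssum (fun k => c k (n - k)%nat) (S n)) T =
  ssum (fun k => ssum (fun m => c k m) (T - k)) T.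
Proof.
  induction T; [simpl; lra|].
  set (F := fun n => ssum (fun k => c k (n - k)%nat) (S n)) in *.
  set (G := fun T k => ssum (fun m => c k m) (T - k)).
  change (ssum F T + F T = ssum (G (S T)) T + G (S T) T).
  rewrite IHT. unfold F, G.
  change (ssum (fun k => c k (T - k)%nat) (S T)) with (ssum (fun k => c k (T - k)%nat) T + c T (T-T)%nat).
  rewrite Nat.sub_diag. replace (S T - T)%nat with 1%nat by lia. simpl ssum at 3.
  assert (ssum (fun k => ssum (fun m => c k m) (S T - k)) T =
          ssum (fun k => ssum (fun m => c k m) (T - k) + c k (T - k)%nat) T).
  { apply ssum_ext. intros i Hi. replace (S T - i)%nat with (S (T - i)) by lia. reflexivity. }
  rewrite H, ssum_plus. simpl. lra.
Qed.

Lemma rect_le_tri (c : nat -> nat -> R) K M :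
  (forall k m, 0 <= c k m) ->
  ssum (fun k => ssum (fun m => c k m) M) K <=
  ssum (fun n => ssum (fun k => c k (n - k)%nat) (S n)) (K + M).
Proof.
  intros Hc. rewrite tri_identity.
  apply Rle_trans with (ssum (fun k => ssum (fun m => c k m) (K + M - k)) K).
  - apply ssum_le. intros i Hi. apply ssum_mono; [lia| auto].
  - apply ssum_mono; [lia|]. intros; apply ssum_nonneg; auto.
Qed.

Lemma tri_le_sq (c : nat -> nat -> R) T :
  (forall k m, 0 <= c k m) ->
  ssum (fun n => ssum (fun k => c k (n - k)%nat) (S n)) T <=
  ssum (fun k => ssum (fun m => c k m) T) T.
Proof.
  intros Hc. rewrite tri_identity. apply ssum_le. intros i Hi. apply ssum_mono; [lia|auto].
Qed.

Definition sp_zero : simple_portfolio :=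
  {| spV := 0; spn := 1; spn_pos := le_n 1; sph := fun _ _ => 0 |}.

Lemma max_pos a b : (1 <= a)%nat -> (1 <= Nat.max a b)%nat.
Proof. lia. Qed.

Definition sp_add (p q : simple_portfolio) : simple_portfolio :=
  {| spV := spV p + spV q; spn := Nat.max (spn p) (spn q);
     spn_pos := max_pos (spn p) (spn q) (spn_pos p);
     sph := fun i l => (if Nat.ltb i (spn p) then sph p i l else 0) +
                       (if Nat.ltb i (spn q) then sph q i l else 0) |}.

Definition sp_scale (c : R) (p : simple_portfolio) : simple_portfolio :=
  {| spV := c * spV p; spn := spn p; spn_pos := spn_pos p;
     sph := fun i l => c * sph p i l |}.

Lemma gains_zero w k : gains sp_zero w k = 0.
Proof. induction k; simpl; auto. rewrite IHk. unfold spH; simpl. ring. Qed.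

Lemma wealth_zero j w : wealth sp_zero j w = 0.
Proof. unfold wealth. rewrite gains_zero. simpl. ring. Qed.

Lemma gains_add p q w k :
  gains (sp_add p q) w k = gains p w (Nat.min k (spn p)) + gains q w (Nat.min k (spn q)).
Proof.
  induction k; [simpl; ring|].
  change (gains (sp_add p q) w (S k)) with (gains (sp_add p q) w k + spH (sp_add p q) k w * (w (k+1)%nat - w k)).
  rewrite IHk. unfold spH at 1. simpl sph.
  destruct (Nat.ltb_spec k (spn p)); destruct (Nat.ltb_spec k (spn q)).
  - replace (Nat.min (S k) (spn p)) with (S (Nat.min k (spn p))) by lia.
    replace (Nat.min (S k) (spn q)) with (S (Nat.min k (spn q))) by lia.
    replace (Nat.min k (spn p)) with k by lia. replace (Nat.min k (spn q)) with k by lia.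
    simpl. unfold spH. ring.
  - replace (Nat.min (S k) (spn p)) with (S (Nat.min k (spn p))) by lia.
    replace (Nat.min (S k) (spn q)) with (Nat.min k (spn q)) by lia.
    replace (Nat.min k (spn p)) with k by lia.
    simpl. unfold spH. ring.
  - replace (Nat.min (S k) (spn q)) with (S (Nat.min k (spn q))) by lia.
    replace (Nat.min (S k) (spn p)) with (Nat.min k (spn p)) by lia.
    replace (Nat.min k (spn q)) with k by lia.
    simpl. unfold spH. ring.
  - replace (Nat.min (S k) (spn q)) with (Nat.min k (spn q)) by lia.
    replace (Nat.min (S k) (spn p)) with (Nat.min k (spn p)) by lia. ring.
Qed.

Lemma winf_add p q w : wealth_inf (sp_add p q) w = wealth_inf p w + wealth_inf q w.
Proof.
  unfold wealth_inf, wealth. rewrite gains_add. simpl spV; simpl spn.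
  rewrite !Nat.min_id.
  replace (Nat.min (Nat.max (spn p) (spn q)) (spn p)) with (spn p) by lia.
  replace (Nat.min (Nat.max (spn p) (spn q)) (spn q)) with (spn q) by lia. ring.
Qed.

Lemma gains_scale c p w k : gains (sp_scale c p) w k = c * gains p w k.
Proof. induction k; simpl; [ring|]. rewrite IHk. unfold spH; simpl. ring. Qed.

Lemma winf_scale c p w : wealth_inf (sp_scale c p) w = c * wealth_inf p w.
Proof. unfold wealth_inf, wealth. rewrite gains_scale. simpl. ring. Qed.

Lemma wealth0 p w : wealth p 0 w = spV p.
Proof. unfold wealth. simpl. ring. Qed.

Fixpoint Fsum (P : nat -> simple_portfolio) (N : nat) : simple_portfolio :=
  match N with O => P O | S N' => sp_add (Fsum P N') (P (S N')) end.

Lemma winf_Fsum P N w : wealth_inf (Fsum P N) w = ssum (fun m => wealth_inf (P m) w) (S N).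
Proof. induction N; simpl Fsum. simpl; ring. rewrite winf_add, IHN. simpl. ring. Qed.

Lemma V_Fsum P N : spV (Fsum P N) = ssum (fun m => spV (P m)) (S N).
Proof. induction N; simpl Fsum. simpl; ring. simpl spV. rewrite IHN. simpl. ring. Qed.

Fixpoint dsum (Q : nat -> nat -> simple_portfolio) (n j : nat) : simple_portfolio :=
  match j with O => Q O n | S j' => sp_add (dsum Q n j') (Q (S j') (n - S j')%nat) end.

Lemma winf_dsum Q n j w : wealth_inf (dsum Q n j) w = ssum (fun k => wealth_inf (Q k (n - k)%nat) w) (S j).
Proof. induction j; simpl dsum. simpl. rewrite Nat.sub_0_r; ring. rewrite winf_add, IHj. simpl. ring. Qed.

Lemma V_dsum Q n j : spV (dsum Q n j) = ssum (fun k => spV (Q k (n - k)%nat)) (S j).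
Proof. induction j; simpl dsum. simpl. rewrite Nat.sub_0_r; ring. simpl spV. rewrite IHj. simpl. ring. Qed.

Definition combineR (Q : nat -> nat -> simple_portfolio) (n : nat) : simple_portfolio :=
  match n with O => sp_zero | S n' => dsum Q n' n' end.

Lemma series_ssum u : series_Rbar u = Lim_seq (fun N => ssum u (S N)).
Proof. unfold series_Rbar. apply Lim_seq_ext. intros; apply ssum_f_R0. Qed.

Lemma series_ge u n : (forall m, (1 <= m)%nat -> 0 <= u m) ->
  Rbar_le (ssum u (S n)) (series_Rbar u).
Proof.
  intros H. rewrite series_ssum. rewrite <- (Lim_seq_const (ssum u (S n))) at 1.
  apply Lim_seq_le_loc. exists n. intros k Hk. apply ssum_mono; [lia|]. intros; apply H; lia.
Qed.

Lemma series_le u e : (forall n, ssum u (S n) <= e) -> Rbar_le (series_Rbar u) e.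
Proof.
  intros H. rewrite series_ssum. rewrite <- (Lim_seq_const e).
  apply Lim_seq_le_loc. exists 0%nat. intros; apply H.
Qed.

Lemma series_lt u (r : R) : Rbar_lt r (series_Rbar u) -> exists n, r < ssum u (S n).
Proof.
  intros H. apply NNPP. intros Hn.
  assert (Rbar_le (series_Rbar u) r).
  { apply series_le. intros n. apply Rnot_lt_le. intros C; apply Hn; eauto. }
  destruct (series_Rbar u); simpl in *; auto; lra.
Qed.

Lemma Rbar_le_lt_false x y : Rbar_le x y -> Rbar_lt y x -> False.
Proof. destruct x, y; simpl; auto; lra. Qed.

Definition PGP Sset P := positive_generalized_portfolio Sset P.

Lemma PGP_V0 Sset P w0 : Sset w0 -> PGP Sset P -> spV (P 0%nat) = 0.
Proof. intros Hw [_ H]. rewrite <- (wealth0 (P 0%nat) w0). apply H; auto. Qed.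

Lemma PGP_W0 Sset P w : Sset w -> PGP Sset P -> wealth_inf (P 0%nat) w = 0.
Proof. intros Hw [_ H]. apply H; auto. Qed.

Lemma GP_terms Sset P w m : Sset w -> generalized_portfolio Sset P -> (1 <= m)%nat ->
  0 <= wealth_inf (P m) w.
Proof. intros Hw H Hm. apply (H m Hm); auto. Qed.

Lemma GP_V Sset P m : generalized_portfolio Sset P -> (1 <= m)%nat -> 0 <= spV (P m).
Proof. intros H Hm. apply (H m Hm). Qed.

Lemma PGP_terms Sset P w m : Sset w -> PGP Sset P -> 0 <= wealth_inf (P m) w.
Proof. intros Hw H. destruct m. rewrite (PGP_W0 Sset P w); auto; lra. apply (GP_terms Sset P w); auto. apply H. lia. Qed.

Lemma PGP_Vs Sset P w0 m : Sset w0 -> PGP Sset P -> 0 <= spV (P m).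
Proof. intros Hw H. destruct m. rewrite (PGP_V0 Sset P w0); auto; lra. apply GP_V with Sset; auto. apply H. lia. Qed.

Lemma PGP_sp Sset P w0 m : Sset w0 -> PGP Sset P -> positive_sp Sset (P m).
Proof. intros Hw H. split. eapply PGP_Vs; eauto. intros w Hw'. eapply PGP_terms; eauto. Qed.

Lemma Ibar_glb Sset f : Rbar_is_glb (fun v => exists P, positive_generalized_portfolio Sset P /\
                        superhedges Sset f P /\ initial_endowment P = v) (Ibar Sset f).
Proof. exact (proj2_sig (Rbar_ex_glb _)). Qed.

Lemma Ibar_le_end Sset f P : PGP Sset P -> superhedges Sset f P ->
  Rbar_le (Ibar Sset f) (initial_endowment P).
Proof.
  intros H1 H2. destruct (Ibar_glb Sset f) as [Hl _].
  apply Hl. exists P; auto.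
Qed.

Lemma endow_ge0 Sset P w0 : Sset w0 -> PGP Sset P -> Rbar_le 0 (initial_endowment P).
Proof.
  intros Hw H. unfold initial_endowment.
  eapply Rbar_le_trans; [| apply (series_ge _ 0)]. simpl. rewrite (PGP_V0 Sset P w0); auto; lra.
  intros; eapply PGP_Vs; eauto.
Qed.

Lemma Ibar_ge0 Sset f w0 : Sset w0 -> Rbar_le 0 (Ibar Sset f).
Proof.
  intros Hw. destruct (Ibar_glb Sset f) as [_ Hl].
  apply Hl. intros x [P [H1 [_ <-]]]. eapply endow_ge0; eauto.
Qed.

Lemma Ibar_approx Sset f (a : R) : Rbar_lt (Ibar Sset f) a ->
  exists P, PGP Sset P /\ superhedges Sset f P /\ Rbar_lt (initial_endowment P) a.
Proof.
  intros H. apply NNPP. intros Hn. revert H.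
  destruct (Ibar_glb Sset f) as [_ Hl].
  intros H. apply (Rbar_le_lt_false a (Ibar Sset f)); auto. apply Hl.
  intros x [P [H1 [H2 <-]]]. destruct (Rbar_le_lt_dec a (initial_endowment P)); auto.
  exfalso; apply Hn; exists P; auto.
Qed.

Lemma ssum_S_shift u T : ssum u (S T) = u 0%nat + ssum (fun n => u (S n)) T.
Proof. induction T. simpl; ring. change (ssum u (S (S T))) with (ssum u (S T) + u (S T)). rewrite IHT. simpl. ring. Qed.

Lemma winf_zero w : wealth_inf sp_zero w = 0.
Proof. apply wealth_zero. Qed.

Lemma Rle_Rbar (a b : R) : a <= b -> Rbar_le a b.
Proof. auto. Qed.

Lemma combine_gp Sset w0 (Q : nat -> nat -> simple_portfolio) (e : nat -> R) (E : R) :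
 Sset w0 ->
 (forall k, PGP Sset (Q k)) ->
 (forall k M, ssum (fun m => spV (Q k m)) M <= e k) ->
 (forall K, ssum e K <= E) ->
 PGP Sset (combineR Q) /\ Rbar_le (initial_endowment (combineR Q)) E /\
 forall w K M, Sset w ->
   Rbar_le (ssum (fun k => ssum (fun m => wealth_inf (Q k m) w) M) K) (total_wealth (combineR Q) w).
Proof.
  intros Hw0 HQ He HE. split; [|split].
  - split.
    + intros m Hm. destruct m; [lia|]. simpl combineR. split.
      * rewrite V_dsum. apply ssum_nonneg. intros. eapply PGP_Vs; eauto.
      * intros w Hw. rewrite winf_dsum. apply ssum_nonneg. intros. eapply PGP_terms; eauto.
    + intros j w _. simpl. apply wealth_zero.
  - unfold initial_endowment. apply series_le. intros n.
    rewrite ssum_S_shift. simpl combineR at 1. simpl spV at 1.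
    rewrite Rplus_0_l.
    eapply Rle_trans.
    { right. apply ssum_ext. intros i _. simpl combineR. rewrite V_dsum. reflexivity. }
    eapply Rle_trans. apply (tri_le_sq (fun k m => spV (Q k m))). intros; eapply PGP_Vs; eauto.
    eapply Rle_trans; [| apply (HE n)]. apply ssum_le. intros; apply He.
  - intros w K M Hw. unfold total_wealth.
    eapply Rbar_le_trans; [| apply (series_ge _ (K + M))].
    + apply Rle_Rbar. rewrite ssum_S_shift. simpl combineR at 1. rewrite winf_zero, Rplus_0_l.
      eapply Rle_trans. apply (rect_le_tri (fun k m => wealth_inf (Q k m) w)).
      intros; eapply PGP_terms; eauto.
      right. apply ssum_ext. intros i _. simpl combineR. rewrite winf_dsum. reflexivity.
    + intros m Hm. destruct m; [lia|]. simpl combineR. rewrite winf_dsum. apply ssum_nonneg.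
      intros; eapply PGP_terms; eauto.
Qed.

Lemma my_pow2_pos K : 0 < 2 ^ K.
Proof. apply pow_lt; lra. Qed.

Lemma geo_eq a K : ssum (fun j => a / 2 ^ (S j)) K = a - a / 2 ^ K.
Proof.
  induction K. simpl. field.
  change (ssum (fun j => a / 2 ^ (S j)) (S K)) with (ssum (fun j => a / 2 ^ (S j)) K + a / 2 ^ (S K)). rewrite IHK.
  pose proof (my_pow2_pos K) as H. simpl. field. lra.
Qed.

Lemma geo a K : 0 <= a -> ssum (fun j => a / 2 ^ (S j)) K <= a.
Proof.
  intros Ha. rewrite geo_eq. pose proof (my_pow2_pos K) as H.
  assert (0 <= a / 2 ^ K) by (apply Rmult_le_pos; auto; left; apply Rinv_0_lt_compat; auto). lra.
Qed.

Lemma ssum_const c K : ssum (fun _ => c) K = INR K * c.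
Proof. induction K. simpl; ring.
  change (ssum (fun _ => c) (S K)) with (ssum (fun _ => c) K + c). rewrite IHK, S_INR. ring. Qed.

Lemma endow_partial Sset w0 Q (e : R) : Sset w0 -> PGP Sset Q ->
  Rbar_le (initial_endowment Q) e -> forall M, ssum (fun m => spV (Q m)) M <= e.
Proof.
  intros Hw HQ He M. destruct M.
  - simpl. pose proof (Rbar_le_trans _ _ _ (endow_ge0 Sset Q w0 Hw HQ) He) as X. simpl in X. auto.
  - pose proof (Rbar_le_trans _ _ _ (series_ge (fun m => spV (Q m)) M ltac:(intros; eapply PGP_Vs; eauto)) He) as X.
    simpl in X. auto.
Qed.

Lemma ind_val A w : A w -> indicator A w = Finite 1.
Proof. unfold indicator. destruct (excluded_middle_informative (A w)); auto; contradiction. Qed.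

Lemma ind_val0 A w : ~ A w -> indicator A w = Finite 0.
Proof. unfold indicator. destruct (excluded_middle_informative (A w)); auto; contradiction. Qed.

Lemma infty_hedge Sset w0 (A : traj -> Prop) (d : R) :
  Sset w0 -> null_set Sset A -> 0 < d ->
  exists H, PGP Sset H /\ Rbar_le (initial_endowment H) d /\
    forall w, Sset w -> A w -> forall r, exists M, r <= ssum (fun m => wealth_inf (H m) w) M.
Proof.
  intros Hw0 Hnull Hd.
  assert (Hj : forall j, exists Z, PGP Sset Z /\ superhedges Sset (fun w => Rbar_abs (indicator A w)) Z /\
     Rbar_lt (initial_endowment Z) (d / 2 ^ (S j))).
  { intros j. apply Ibar_approx. unfold null_set, Defs.norm in Hnull. rewrite Hnull. simpl.
    apply Rmult_lt_0_compat; auto. apply Rinv_0_lt_compat, (my_pow2_pos (S j)). }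
  set (Z := fun j => proj1_sig (constructive_indefinite_description _ (Hj j))).
  assert (HZ : forall j, PGP Sset (Z j) /\ superhedges Sset (fun w => Rbar_abs (indicator A w)) (Z j) /\
     Rbar_lt (initial_endowment (Z j)) (d / 2 ^ (S j))).
  { intros j. exact (proj2_sig (constructive_indefinite_description _ (Hj j))). }
  destruct (combine_gp Sset w0 Z (fun j => d / 2 ^ (S j)) d Hw0) as [HP [He Hr]].
  - intros k; apply HZ.
  - intros k M. eapply endow_partial; eauto. apply HZ. apply Rbar_lt_le. apply HZ.
  - intros K. apply geo. lra.
  - exists (combineR Z). split; [|split]; auto.
    intros w Hw HA r.
    assert (Hone : forall j, exists M, 1/2 < ssum (fun m => wealth_inf (Z j m) w) (S M)).
    { intros j. apply series_lt. destruct (HZ j) as [_ [Hs _]]. specialize (Hs w Hw). cbv beta in Hs.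
      rewrite ind_val in Hs; auto. replace (Rbar_abs (Finite 1)) with (Finite 1) in Hs by (simpl; rewrite Rabs_R1; auto).
      eapply Rbar_lt_le_trans; [| apply Hs]. simpl. lra. }
    assert (Hunif : forall K, exists M, forall j, (j < K)%nat -> 1/2 <= ssum (fun m => wealth_inf (Z j m) w) M).
    { induction K. exists 0%nat; intros; lia.
      destruct IHK as [M HM]. destruct (Hone K) as [MK HMK].
      exists (Nat.max M (S MK)). intros j Hj'.
      destruct (Nat.eq_dec j K).
      - subst. left. eapply Rlt_le_trans; [apply HMK|]. apply ssum_mono; [lia|].
        intros; apply (PGP_terms Sset); [exact Hw| apply HZ].
      - eapply Rle_trans; [apply (HM j); lia|]. apply ssum_mono; [lia|].
        intros; apply (PGP_terms Sset); [exact Hw| apply HZ]. }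
    destruct (INR_unbounded (2 * r)) as [K HK].
    destruct (Hunif K) as [M HM].
    pose proof (Hr w K M Hw) as Hrect.
    assert (Hlt : Rbar_lt r (total_wealth (combineR Z) w)).
    { eapply Rbar_lt_le_trans; [| apply Hrect]. simpl.
      eapply Rlt_le_trans; [| apply (ssum_le (fun _ => 1/2))]. rewrite ssum_const. lra.
      intros; apply HM; auto. }
    destruct (series_lt _ _ Hlt) as [n Hn]. exists (S n). left; auto.
Qed.

Definition tailP (P : nat -> simple_portfolio) (N : nat) (m : nat) : simple_portfolio :=
  match m with O => sp_zero | S m' => sp_scale (INR N + 1) (P (S (N + m'))) end.

Definition threeQ (A B : nat -> simple_portfolio) (k : nat) : nat -> simple_portfolio :=
  match k with O => A | 1%nat => B | _ => fun _ => sp_zero end.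

Lemma tail_winf P N w n :
  ssum (fun m => wealth_inf (tailP P N m) w) (S n) =
  (INR N + 1) * (ssum (fun m => wealth_inf (P m) w) (S N + n) - ssum (fun m => wealth_inf (P m) w) (S N)).
Proof.
  rewrite ssum_S_shift. simpl tailP at 1. rewrite winf_zero, Rplus_0_l.
  rewrite ssum_shift.
  replace (ssum (fun m : nat => wealth_inf (P m) w) (S N) +
    ssum (fun i : nat => wealth_inf (P (S N + i)%nat) w) n -
    ssum (fun m : nat => wealth_inf (P m) w) (S N)) with (ssum (fun i : nat => wealth_inf (P (S N + i)%nat) w) n) by ring.
  rewrite <- ssum_scal. apply ssum_ext. intros i _. simpl tailP. rewrite winf_scale. reflexivity.
Qed.

Lemma tail_V P N n :
  ssum (fun m => spV (tailP P N m)) (S n) =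
  (INR N + 1) * (ssum (fun m => spV (P m)) (S N + n) - ssum (fun m => spV (P m)) (S N)).
Proof.
  rewrite ssum_S_shift. simpl tailP at 1. simpl spV at 1. rewrite Rplus_0_l.
  rewrite ssum_shift.
  replace (ssum (fun m => spV (P m)) (S N) +
    ssum (fun i : nat => spV (P (S N + i)%nat)) n -
    ssum (fun m => spV (P m)) (S N)) with (ssum (fun i : nat => spV (P (S N + i)%nat)) n) by ring.
  rewrite <- ssum_scal. apply ssum_ext. intros i _. simpl tailP. reflexivity.
Qed.

Lemma PGP_zero Sset : PGP Sset (fun _ => sp_zero).
Proof.
  split. intros m _. split. simpl; lra. intros; rewrite winf_zero; lra.
  intros; apply wealth_zero.
Qed.

Lemma INRp1 N : 0 < INR N + 1.
Proof. pose proof (pos_INR N). lra. Qed.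

Lemma PGP_tail Sset P N : generalized_portfolio Sset P -> PGP Sset (tailP P N).
Proof.
  intros HG. split.
  - intros m Hm. destruct m; [lia|]. simpl tailP. split.
    + simpl. apply Rmult_le_pos. pose proof (INRp1 N); lra. apply (GP_V Sset); auto; lia.
    + intros w Hw. rewrite winf_scale. apply Rmult_le_pos. pose proof (INRp1 N); lra. apply (GP_terms Sset); auto; lia.
  - intros; simpl; apply wealth_zero.
Qed.

Lemma PGP_three Sset A B : PGP Sset A -> PGP Sset B -> forall k, PGP Sset (threeQ A B k).
Proof. intros HA HB k. destruct k as [|[|k]]; simpl; auto. apply PGP_zero. Qed.

Lemma Rbar_le_approx (x : R) y : (forall e, 0 < e -> Rbar_le (x - e) y) -> Rbar_le x y.
Proof.
  intros H. destruct y as [y| |]; simpl; auto.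
  - apply Rnot_lt_le. intros C. specialize (H ((x - y)/2) ltac:(lra)). simpl in H. lra.
  - specialize (H 1 ltac:(lra)). simpl in H. auto.
Qed.

Lemma ssum_one u : ssum u 1 = u 0%nat.
Proof. simpl; ring. Qed.

Lemma step3 Sset w0 P N d :
  condK Sset -> Sset w0 -> generalized_portfolio Sset P ->
  (forall n, ssum (fun m => spV (P m)) (S n) <= 0) ->
  null_set Sset (fun w => Sset w /\ Rbar_lt (total_wealth P w) (Finite 0)) ->
  0 < d ->
  Rbar_le (Ibar Sset (fun w => Finite (Rmax (- wealth_inf (sp_scale (-(INR N + 1)) (Fsum P N)) w) 0))) d.
Proof.
  intros HK Hw0 HG HV Hnull Hd.
  set (p := sp_scale (-(INR N + 1)) (Fsum P N)).
  set (c := -(INR N + 1) * ssum (fun m => spV (P m)) (S N)).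
  assert (Hc : 0 <= c).
  { unfold c. pose proof (HV N). pose proof (INRp1 N). nra. }
  assert (Hpc : spV p = c). { unfold p, c. simpl spV. rewrite V_Fsum. reflexivity. }
  destruct (infty_hedge Sset w0 _ d Hw0 Hnull Hd) as [H [HH [HHe HHr]]].
  set (Qc := threeQ (tailP P N) H).
  destruct (combine_gp Sset w0 Qc (fun k => match k with O => c | 1%nat => d | _ => 0 end) (c + d) Hw0)
    as [HR [HRe HRr]].
  - apply PGP_three; auto. apply PGP_tail; auto.
  - intros k M. destruct k as [|[|k]]; simpl Qc.
    + destruct M. simpl; lra. rewrite tail_V.
      rewrite ssum_shift. pose proof (HV (N + M)%nat) as X. simpl (S N + M)%nat in *.
      unfold c. pose proof (INRp1 N).
      assert (ssum (fun m => spV (P m)) (S N) + ssum (fun i => spV (P (S N + i)%nat)) M -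
              ssum (fun m => spV (P m)) (S N) <= - ssum (fun m => spV (P m)) (S N)).
      { change (S (N + M)) with (S N + M)%nat in X. rewrite ssum_shift in X. lra. }
      nra.
    + eapply endow_partial; eauto.
    + unfold threeQ. cbv beta. apply Rle_trans with 0; [|lra]. right.
      induction M; [reflexivity|]. change (ssum (fun _ => spV sp_zero) (S M)) with (ssum (fun _ => spV sp_zero) M + spV sp_zero).
      rewrite IHM. simpl. lra.
  - intros K. apply Rle_trans with (ssum (fun k => match k with O => c | 1%nat => d | _ => 0 end) (2 + K)).
    + apply ssum_mono; [lia|]. intros [|[|i]] _; lra.
    + rewrite ssum_shift. simpl. 
      assert (Z : forall k, ssum (fun i => match (S (S i)) with O => c | 1%nat => d | _ => 0 end) k = 0)
        by (induction k; simpl; [auto| rewrite IHk; simpl; lra]).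
      rewrite Z. lra.
  - assert (Hminus : Rbar_le (Ibar Sset (fun w => Finite (Rmax (wealth_inf p w) 0))) (c + d)).
    { eapply Rbar_le_trans; [| apply HRe]. apply Ibar_le_end; auto.
      intros w Hw.
      assert (Hwp : wealth_inf p w = -(INR N + 1) * ssum (fun m => wealth_inf (P m) w) (S N)).
      { unfold p. rewrite winf_scale, winf_Fsum. reflexivity. }
      rewrite Hwp. set (X := ssum (fun m => wealth_inf (P m) w) (S N)).
      destruct (Rle_dec (-(INR N + 1) * X) 0) as [Hle|Hgt].
      - rewrite Rmax_right by lra. apply (HRr w 0%nat 0%nat Hw).
      - rewrite Rmax_left by lra.
        destruct (classic (Rbar_lt (total_wealth P w) (Finite 0))) as [HN0|HN0].
        + destruct (HHr w Hw (conj Hw HN0) (-(INR N + 1) * X)) as [M HM].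
          eapply Rbar_le_trans; [| apply (HRr w 2%nat M Hw)].
          simpl. unfold Qc, threeQ.
          assert (0 <= ssum (fun m => wealth_inf (tailP P N m) w) M).
          { apply ssum_nonneg. intros; apply (PGP_terms Sset); auto. apply PGP_tail; auto. }
          lra.
        + apply Rbar_not_lt_le in HN0.
          apply Rbar_le_approx. intros e He.
          set (e' := e / (INR N + 1)).
          assert (He' : 0 < e') by (unfold e'; apply Rdiv_lt_0_compat; auto; apply INRp1).
          assert (Hlt : Rbar_lt (- e') (total_wealth P w)).
          { eapply Rbar_lt_le_trans; [| apply HN0]. simpl. lra. }
          destruct (series_lt _ _ Hlt) as [n Hn].
          eapply Rbar_le_trans; [| apply (HRr w 1%nat (S n) Hw)].
          apply Rle_Rbar. rewrite ssum_one. unfold Qc, threeQ. rewrite tail_winf.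
          assert (Hmono : ssum (fun m => wealth_inf (P m) w) (S n) <= ssum (fun m => wealth_inf (P m) w) (S N + n)).
          { apply ssum_mono; [lia|]. intros; apply (GP_terms Sset); auto; lia. }
          fold X. pose proof (INRp1 N).
          assert (e = e' * (INR N + 1)) by (unfold e'; field; lra).
          nra. }
    pose proof (HK p) as HKp. rewrite Hpc in HKp.
    pose proof (Ibar_ge0 Sset (fun w => Finite (Rmax (- wealth_inf p w) 0)) w0 Hw0) as Hge.
    pose proof (Rbar_le_trans _ _ _ HKp Hminus) as Y.
    destruct (Ibar Sset (fun w => Finite (Rmax (- wealth_inf p w) 0))) as [y| |]; simpl in *; auto; lra.
Qed.

Definition sp_one : simple_portfolio :=
  {| spV := 1; spn := 1; spn_pos := le_n 1; sph := fun _ _ => 0 |}.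

Theorem theorem4p5 (s0 : R) (Sset : traj -> Prop) :
  trajectory_set s0 Sset -> LOP Sset -> condK Sset ->
  ~ exists P : nat -> simple_portfolio, arbitrage_null Sset P.
Proof.
  intros _ HLOP HK [P [HG [Hend [Hnull Hnn]]]].
  destruct (classic (exists w, Sset w)) as [[w0 Hw0]|Hno].
  2:{ assert (E : spV sp_zero = spV sp_one).
      { apply HLOP. intros w Hw. exfalso; apply Hno; eauto. }
      simpl in E. lra. }
  assert (HV : forall n, ssum (fun m => spV (P m)) (S n) <= 0).
  { intros n. pose proof (series_ge (fun m => spV (P m)) n ltac:(intros; apply (GP_V Sset); auto)) as X.
    unfold initial_endowment in Hend. rewrite Hend in X. simpl in X. auto. }
  apply Hnn. unfold null_set, Defs.norm.
  set (A := fun w => Sset w /\ Rbar_lt (Finite 0) (total_wealth P w)).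
  assert (Hsmall : forall eps, 0 < eps -> Rbar_le (Ibar Sset (fun w => Rbar_abs (indicator A w))) eps).
  { intros eps Heps.
    assert (HQ : forall N, exists Q, PGP Sset Q /\
       superhedges Sset (fun w => Finite (Rmax (- wealth_inf (sp_scale (-(INR N + 1)) (Fsum P N)) w) 0)) Q /\
       Rbar_lt (initial_endowment Q) (eps / 2 ^ (S N))).
    { intros N. apply Ibar_approx.
      assert (Hp : 0 < eps / 2 ^ (S N)).
      { apply Rdiv_lt_0_compat; auto. apply (my_pow2_pos (S N)). }
      set (q := eps / 2 ^ (S N)) in *.
      eapply Rbar_le_lt_trans. apply (step3 Sset w0 P N (q / 2)); auto. lra.
      simpl. lra. }
    set (Q := fun N => proj1_sig (constructive_indefinite_description _ (HQ N))).
    assert (HQs : forall N, PGP Sset (Q N) /\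
       superhedges Sset (fun w => Finite (Rmax (- wealth_inf (sp_scale (-(INR N + 1)) (Fsum P N)) w) 0)) (Q N) /\
       Rbar_lt (initial_endowment (Q N)) (eps / 2 ^ (S N))).
    { intros N. exact (proj2_sig (constructive_indefinite_description _ (HQ N))). }
    destruct (combine_gp Sset w0 Q (fun j => eps / 2 ^ (S j)) eps Hw0) as [HR [HRe HRr]].
    - intros k; apply HQs.
    - intros k M. eapply endow_partial; eauto. apply HQs. apply Rbar_lt_le. apply HQs.
    - intros K. apply geo. lra.
    - eapply Rbar_le_trans; [| apply HRe]. apply Ibar_le_end; auto.
      intros w Hw. cbv beta.
      destruct (classic (A w)) as [HA|HA].
      + rewrite ind_val by auto. replace (Rbar_abs (Finite 1)) with (Finite 1) by (simpl; rewrite Rabs_R1; auto).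
        destruct HA as [_ HA].
        destruct (series_lt _ _ HA) as [n Hn].
        set (Y := ssum (fun m => wealth_inf (P m) w) (S n)) in *.
        destruct (INR_unbounded (1 / Y)) as [k Hk].
        set (N' := Nat.max n k).
        set (Y' := ssum (fun m => wealth_inf (P m) w) (S N')).
        assert (HYY : Y <= Y').
        { apply ssum_mono; [unfold N'; lia|]. intros; apply (GP_terms Sset); auto; lia. }
        assert (Hkn : INR k <= INR N') by (apply le_INR; unfold N'; lia).
        assert (HY1 : Y * (1 / Y) = 1) by (field; lra).
        pose proof (pos_INR k).
        assert (Hbig : 1 < (INR N' + 1) * Y') by nra.
        destruct (HQs N') as [HQP [HQh _]].
        specialize (HQh w Hw). cbv beta in HQh.
        rewrite winf_scale, winf_Fsum in HQh. fold Y' in HQh.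
        assert (Hlt : Rbar_lt 1 (total_wealth (Q N') w)).
        { eapply Rbar_lt_le_trans; [| apply HQh]. simpl.
          eapply Rlt_le_trans; [| apply Rmax_l]. lra. }
        destruct (series_lt _ _ Hlt) as [M HM].
        eapply Rbar_le_trans; [| apply (HRr w (S N') (S M) Hw)].
        apply Rle_Rbar.
        change (ssum (fun k0 => ssum (fun m => wealth_inf (Q k0 m) w) (S M)) (S N'))
          with (ssum (fun k0 => ssum (fun m => wealth_inf (Q k0 m) w) (S M)) N' +
                ssum (fun m => wealth_inf (Q N' m) w) (S M)).
        assert (0 <= ssum (fun k0 => ssum (fun m => wealth_inf (Q k0 m) w) (S M)) N').
        { apply ssum_nonneg. intros; apply ssum_nonneg. intros; apply (PGP_terms Sset); auto. apply HQs. }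
        lra.
      + rewrite ind_val0 by auto. replace (Rbar_abs (Finite 0)) with (Finite 0) by (simpl; rewrite Rabs_R0; auto).
        apply (HRr w 0%nat 0%nat Hw). }
  pose proof (Ibar_ge0 Sset (fun w => Rbar_abs (indicator A w)) w0 Hw0) as Hge.
  destruct (Ibar Sset (fun w => Rbar_abs (indicator A w))) as [y| |] eqn:Ey.
  - f_equal. simpl in Hge. destruct (Rle_lt_dec y 0). lra.
    specialize (Hsmall (y / 2) ltac:(lra)). simpl in Hsmall. lra.
  - specialize (Hsmall 1 ltac:(lra)). simpl in Hsmall. contradiction.
  - simpl in Hge. contradiction.
Qed.
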